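(* Let $\theta>0$, $h>0$ and $\mu=\frac12(\delta_{-1}+\delta_{+1})$. For $r\ge0$ and $\Psi\in[0,2\pi)$ let \[ q_{r,\Psi}(x,\eta)=[Z_{r,\Psi}(\eta)]^{-1}\exp\{2\theta r\cos(\Psi-x)+2h\eta\cos x\},\qquad Z_{r,\Psi}(\eta)=\int_0^{2\pi}\exp\{2\theta r\cos(\Psi-x)+2h\eta\cos x\}\,dx, \] and consider the self-consistency relation \[ r e^{i\Psi}=\int_{\{-1,+1\}}\int_0^{2\pi}e^{ix}\,q_{r,\Psi}(x,\eta)\,dx\,\mu(d\eta). \] This relation admits solutions $(r_+,\Psi_+)$ with $r_+>0$ if and only if $\Psi_+\in\{0,\frac{\pi}{2},\pi,\frac{3\pi}{2}\}$. Moreover, $r=r_+$ has to satisfy \[ r=\begin{cases}\dfrac12\left[\dfrac{I_1(2(h+\theta r))}{I_0(2(h+\theta r))}-\dfrac{I_1(2(h-\theta r))}{I_0(2(h-\theta r))}\right] & \text{if } \Psi_+\in\{0,\pi\},\\[3mm] \dfrac{\theta r}{\sqrt{h^2+\theta^2r^2}}\,\dfrac{I_1\big(2\sqrt{h^2+\theta^2r^2}\big)}{I_0\big(2\sqrt{h^2+\theta^2r^2}\big)} & \text{if } \Psi_+\in\{\frac{\pi}{2},\frac{3\pi}{2}\},\end{cases} \] where $I_v(y)=\frac{1}{2\pi}\int_0^{2\pi}\cos(v\alpha)\exp\{y\cos\alpha\}\,d\alpha$ denotes the modified Bessel function of the first kind of order $v$.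
   Context: $\theta>0$ is the coupling strength, $h>0$ the field intensity, $\mu$ the uniform law on $\{-1,+1\}$ of the random field. Solutions $(r,\Psi)$ with $r>0$ are called ferromagnetic. *)

(* Defs.v *)
From Stdlib Require Import Reals.
From Coquelicot Require Import Coquelicot.
Open Scope R_scope.

Definition cis (x : R) : C := (cos x, sin x).

Definition weight (theta h r Psi x eta : R) : R :=
  exp (2 * theta * r * cos (Psi - x) + 2 * h * eta * cos x).

Definition Zpart (theta h r Psi eta : R) : R :=
  RInt (fun x => weight theta h r Psi x eta) 0 (2 * PI).

Definition q (theta h r Psi x eta : R) : R :=
  / Zpart theta h r Psi eta * weight theta h r Psi x eta.

Definition mu_integral (F : R -> C) : C :=
  ((/2 : C) * (F (-1) + F 1))%C.

Definition self_consistent (theta h r Psi : R) : Prop :=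
  (r * cis Psi)%C =
  mu_integral (fun eta =>
    @RInt C_R_CompleteNormedModule
      (fun x => (RtoC (q theta h r Psi x eta) * cis x)%C) 0 (2 * PI)).

Definition BesselI (v y : R) : R :=
  / (2 * PI) * RInt (fun a => cos (v * a) * exp (y * cos a)) 0 (2 * PI).

(* Main.v *)
Require Import Defs.
From Stdlib Require Import Reals Lra.
From Coquelicot Require Import Coquelicot.
Open Scope R_scope.


Lemma cont_d (f : R -> R) x : ex_derive f x -> continuous f x.
Proof. intros H. apply (@ex_derive_continuous R_AbsRing R_NormedModule). exact H. Qed.
Lemma ex_RInt_c (f : R -> R) a b : (forall x, continuous f x) -> ex_RInt f a b.
Proof. intros H. apply (@ex_RInt_continuous R_CompleteNormedModule). intros. auto. Qed.
Lemma ex_RInt_d (f : R -> R) a b : (forall x, ex_derive f x) -> ex_RInt f a b.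
Proof. intros H. apply ex_RInt_c. intros. apply cont_d. auto. Qed.
Lemma chasles (f : R -> R) a b c : (forall x, continuous f x) -> RInt f a b + RInt f b c = RInt f a c.
Proof. intros H. apply (@RInt_Chasles R_CompleteNormedModule); apply ex_RInt_c; auto. Qed.
Lemma swapR (f : R -> R) a b : (forall x, continuous f x) -> RInt f b a = - RInt f a b.
Proof. intros H. rewrite <- (@opp_RInt_swap R_CompleteNormedModule). reflexivity. apply ex_RInt_c; auto. Qed.
Lemma shiftI (F : R -> R) c a b : (forall x, continuous F x) ->
  RInt (fun x => F (x + c)) a b = RInt F (a + c) (b + c).
Proof. intros H.
  rewrite <- (Rmult_1_l a) at 2. rewrite <- (Rmult_1_l b) at 2.
  rewrite <- (@RInt_comp_lin R_CompleteNormedModule F 1 c a b).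
  apply RInt_ext. intros. simpl. unfold scal; simpl; unfold mult; simpl. rewrite Rmult_1_l, Rmult_1_l. reflexivity.
  apply ex_RInt_c; auto. Qed.
Lemma shift (F : R -> R) c : (forall x, continuous F x) -> (forall x, F (x + 2*PI) = F x) ->
  RInt (fun x => F (x + c)) 0 (2*PI) = RInt F 0 (2*PI).
Proof. intros H Hp. rewrite shiftI; auto.
  rewrite Rplus_0_l.
  rewrite <- (chasles F c 0 (2*PI+c)); auto.
  rewrite <- (chasles F 0 (2*PI) (2*PI+c)); auto.
  replace (RInt F (2*PI) (2*PI+c)) with (RInt F 0 c).
  rewrite (swapR F 0 c); auto. lra.
  transitivity (RInt (fun x => F (x + 2*PI)) 0 c).
  apply RInt_ext. intros; rewrite Hp; auto.
  rewrite shiftI; auto. f_equal; ring.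
Qed.
Lemma RInt_pos_pt (f : R -> R) a b c : a < c < b -> (forall x, continuous f x) ->
  (forall x, a < x < b -> 0 <= f x) -> 0 < f c -> 0 < RInt f a b.
Proof.
  intros Hc Hcont Hnn Hfc.
  assert (Hcp : continuity_pt f c) by (apply continuity_pt_filterlim; apply Hcont).
  unfold continuity_pt, continue_in, limit1_in, limit_in in Hcp.
  destruct (Hcp (f c) Hfc) as [alp [Halp Hd]].
  set (e := Rmin alp (Rmin (c - a) (b - c)) / 2).
  assert (He1 : e <= alp/2) by (unfold e; apply Rmult_le_compat_r; [lra| apply Rmin_l]).
  assert (He2 : e <= (c-a)/2) by (unfold e; apply Rmult_le_compat_r; [lra| eapply Rle_trans; [apply Rmin_r| apply Rmin_l]]).
  assert (He3 : e <= (b-c)/2) by (unfold e; apply Rmult_le_compat_r; [lra| eapply Rle_trans; [apply Rmin_r| apply Rmin_r]]).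
  assert (He : 0 < e). { unfold e. apply Rmult_lt_0_compat; [|lra]. apply Rmin_pos; [lra| apply Rmin_pos; lra]. }
  rewrite <- (chasles f a (c-e) b); auto.
  rewrite <- (chasles f (c-e) (c+e) b); auto.
  assert (0 <= RInt f a (c-e)).
  { apply RInt_ge_0. lra. apply ex_RInt_c; auto. intros; apply Hnn; lra. }
  assert (0 <= RInt f (c+e) b).
  { apply RInt_ge_0. lra. apply ex_RInt_c; auto. intros; apply Hnn; lra. }
  assert (0 < RInt f (c-e) (c+e)).
  { apply RInt_gt_0. lra. 2: intros; auto.
    intros x Hx. destruct (Req_dec x c) as [->|Hne]. auto.
    assert (R_dist (f x) (f c) < f c). apply Hd. split. split. exact I. auto.
    simpl. unfold R_dist. apply Rabs_def1; lra.
    unfold R_dist in H1. apply Rabs_def2 in H1. lra. }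
  lra.
Qed.
Ltac rring := match goal with |- ?a = ?b => change (a = b :> R) end; ring.
Ltac cont := intros; apply cont_d; auto_derive; auto.
Lemma RInt_add (f g : R -> R) a b : (forall x, continuous f x) -> (forall x, continuous g x) ->
  RInt (fun x => f x + g x) a b = RInt f a b + RInt g a b.
Proof. intros. apply (@RInt_plus R_CompleteNormedModule); apply ex_RInt_c; auto. Qed.
Lemma RInt_sub (f g : R -> R) a b : (forall x, continuous f x) -> (forall x, continuous g x) ->
  RInt (fun x => f x - g x) a b = RInt f a b - RInt g a b.
Proof. intros. apply (@RInt_minus R_CompleteNormedModule); apply ex_RInt_c; auto. Qed.
Lemma RInt_mulc (f : R -> R) k a b : (forall x, continuous f x) ->
  RInt (fun x => k * f x) a b = k * RInt f a b.
Proof. intros. apply (@RInt_scal R_CompleteNormedModule); apply ex_RInt_c; auto. Qed.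
Lemma FTC0 (F f : R -> R) : (forall x, is_derive F x (f x)) -> (forall x, continuous f x) ->
  F (2*PI) = F 0 -> RInt f 0 (2*PI) = 0.
Proof. intros HD Hc He.
  assert (H := @is_RInt_derive R_CompleteNormedModule F f 0 (2*PI) (fun x _ => HD x) (fun x _ => Hc x)).
  apply is_RInt_unique in H. rewrite H, He. unfold minus, plus, opp; simpl. ring. Qed.
Lemma cos2PI x : cos (x + 2*PI) = cos x.
Proof. rewrite cos_plus, cos_2PI, sin_2PI. ring. Qed.
Lemma sin2PI x : sin (x + 2*PI) = sin x.
Proof. rewrite sin_plus, cos_2PI, sin_2PI. ring. Qed.

Definition Dv p := RInt (fun y => exp (p * cos y)) 0 (2*PI).
Definition Nv p := RInt (fun y => cos y * exp (p * cos y)) 0 (2*PI).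
Definition Cv p := RInt (fun y => cos y ^ 2 * exp (p * cos y)) 0 (2*PI).

Lemma Dv_pos p : 0 < Dv p.
Proof. apply RInt_gt_0. pose proof PI_RGT_0; lra. intros; apply exp_pos. cont. Qed.

Lemma Dv_even p : Dv (-p) = Dv p.
Proof. unfold Dv. rewrite <- (shift (fun y => exp (p * cos y)) PI). apply RInt_ext. intros.
  rewrite neg_cos. f_equal. ring. cont. intros; rewrite cos2PI; auto. Qed.
Lemma Cv_even p : Cv (-p) = Cv p.
Proof. unfold Cv. rewrite <- (shift (fun y => cos y ^ 2 * exp (p * cos y)) PI). apply RInt_ext. intros.
  rewrite neg_cos. f_equal. ring. f_equal. ring. cont. intros; rewrite cos2PI; auto. Qed.
Lemma Nv_odd p : Nv (-p) = - Nv p.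
Proof. replace (- Nv p) with (-1 * Nv p) by ring. unfold Nv. rewrite <- RInt_mulc by cont.
  rewrite <- (shift (fun y => -1 * (cos y * exp (p * cos y))) PI). apply RInt_ext. intros.
  rewrite neg_cos. replace (p * - cos x) with (-p * cos x) by ring. rring. cont. intros; rewrite cos2PI; auto. Qed.

Lemma Sv0 p : RInt (fun y => sin y * exp (p * cos y)) 0 (2*PI) = 0.
Proof. destruct (Req_dec p 0) as [->|Hp].
  - rewrite (RInt_ext _ sin). apply (FTC0 (fun y => - cos y)). intros; auto_derive; auto; rring. cont.
    rewrite cos_2PI, cos_0; auto. intros; rewrite Rmult_0_l, exp_0; rring.
  - assert (RInt (fun y => - p * (sin y * exp (p * cos y))) 0 (2*PI) = 0).
    apply (FTC0 (fun y => exp (p * cos y))). intros; auto_derive; auto; rring. cont.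
    rewrite cos_2PI, cos_0; auto.
    rewrite RInt_mulc in H by cont. apply Rmult_integral in H. destruct H; auto. lra.
Qed.

Lemma Nv_parts p : Nv p = p * (Dv p - Cv p).
Proof.
  assert (RInt (fun y => cos y * exp (p * cos y) - p * (exp (p * cos y) - cos y ^2 * exp (p * cos y)) ) 0 (2*PI) = 0).
  { apply (FTC0 (fun y => sin y * exp (p * cos y))). intros; auto_derive; auto.
    match goal with |- ?a = ?b => change (a = b :> R) end.
    replace (sin x * (p * (1 * - sin x) * exp (p * cos x))) with (-(p * exp (p * cos x)) * (sin x * sin x)) by ring.
    pose proof (sin2 x) as Hs; unfold Rsqr in Hs; rewrite Hs. rring. cont.
    rewrite sin_2PI, sin_0; ring. }
  rewrite RInt_sub in H by cont. rewrite RInt_mulc in H by cont. rewrite RInt_sub in H by cont.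
  unfold Nv, Dv, Cv. lra.
Qed.
Definition ch t := exp t + exp (- t).
Lemma ch_abs t : ch (Rabs t) = ch t.
Proof. unfold ch. destruct (Rle_dec 0 t). rewrite Rabs_right; lra. rewrite Rabs_left by lra. rewrite Ropp_involutive. lra. Qed.
Lemma ch_lt0 a b : 0 <= a < b -> ch a < ch b.
Proof. intros H. unfold ch.
  assert (exp a < exp b) by (apply exp_increasing; lra).
  assert (exp (-a-b) < 1) by (rewrite <- exp_0; apply exp_increasing; lra).
  assert (E1 : exp b * exp (-a-b) = exp (-a)) by (rewrite <- exp_plus; f_equal; ring).
  assert (E2 : exp a * exp (-a-b) = exp (-b)) by (rewrite <- exp_plus; f_equal; ring).
  assert (0 < (exp b - exp a) * (1 - exp (-a-b))) by (apply Rmult_lt_0_compat; lra).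
  nra. Qed.
Lemma ch_lt s t : s^2 < t^2 -> ch s < ch t.
Proof. intros H. rewrite <- ch_abs, <- (ch_abs t). apply ch_lt0. split. apply Rabs_pos.
  apply Rsqr_lt_abs_0. unfold Rsqr; lra. Qed.
Lemma ch_le s t : s^2 <= t^2 -> ch s <= ch t.
Proof. intros H. destruct (Rle_lt_or_eq_dec _ _ H). left; apply ch_lt; auto.
  rewrite <- ch_abs, <- (ch_abs t). right. f_equal.
  apply Rsqr_eq_abs_0. unfold Rsqr; lra. Qed.
Definition Kf p q u v := (v^2 - u^2) * (ch (p*u+q*v) - ch (q*u+p*v)).
Lemma Kf_nonneg p q u v : 0 <= p <= q -> 0 <= Kf p q u v.
Proof. intros H. unfold Kf.
  assert (Hd : (p*u+q*v)^2 - (q*u+p*v)^2 = (q^2-p^2)*(v^2-u^2)) by ring.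
  assert (0 <= q^2 - p^2) by nra.
  destruct (Rle_dec (u^2) (v^2)).
  - apply Rmult_le_pos. lra. assert (ch (q*u+p*v) <= ch (p*u+q*v)) by (apply ch_le; nra). lra.
  - replace ((v^2 - u^2) * (ch (p*u+q*v) - ch (q*u+p*v))) with ((u^2 - v^2) * (ch (q*u+p*v) - ch (p*u+q*v))) by ring.
    apply Rmult_le_pos. lra. assert (ch (p*u+q*v) <= ch (q*u+p*v)) by (apply ch_le; nra). lra.
Qed.
Lemma Kf_pos p q u v : 0 <= p < q -> u^2 <> v^2 -> 0 < Kf p q u v.
Proof. intros H Huv. unfold Kf.
  assert (Hd : (p*u+q*v)^2 - (q*u+p*v)^2 = (q^2-p^2)*(v^2-u^2)) by ring.
  assert (0 < q^2 - p^2) by nra.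
  destruct (Rlt_le_dec (u^2) (v^2)).
  - apply Rmult_lt_0_compat. lra. assert (ch (q*u+p*v) < ch (p*u+q*v)) by (apply ch_lt; nra). lra.
  - replace ((v^2 - u^2) * (ch (p*u+q*v) - ch (q*u+p*v))) with ((u^2 - v^2) * (ch (q*u+p*v) - ch (p*u+q*v))) by ring.
    assert (v^2 < u^2) by lra.
    apply Rmult_lt_0_compat. lra. assert (ch (p*u+q*v) < ch (q*u+p*v)) by (apply ch_lt; nra). lra.
Qed.
Lemma lin4 (f1 f2 f3 f4 : R -> R) a1 a2 a3 a4 a b :
  (forall x, ex_derive f1 x) -> (forall x, ex_derive f2 x) -> (forall x, ex_derive f3 x) -> (forall x, ex_derive f4 x) ->
  RInt (fun y => a1 * f1 y + a2 * f2 y + a3 * f3 y + a4 * f4 y) a b =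
  a1 * RInt f1 a b + a2 * RInt f2 a b + a3 * RInt f3 a b + a4 * RInt f4 a b.
Proof. intros H1 H2 H3 H4.
  rewrite (RInt_add (fun y => a1 * f1 y + a2 * f2 y + a3 * f3 y) (fun y => a4 * f4 y)) by cont.
  rewrite (RInt_add (fun y => a1 * f1 y + a2 * f2 y) (fun y => a3 * f3 y)) by cont.
  rewrite (RInt_add (fun y => a1 * f1 y) (fun y => a2 * f2 y)) by cont.
  rewrite !RInt_mulc by cont. reflexivity. Qed.
Definition Fp k u y := cos y ^2 * exp (k * cos y) - u^2 * exp (k * cos y).
Lemma Ipiece k u : RInt (Fp k u) 0 (2*PI) = Cv k - u^2 * Dv k.
Proof. unfold Fp. rewrite (RInt_sub (fun y => cos y ^2 * exp (k * cos y)) (fun y => u^2 * exp (k * cos y))) by cont.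
  rewrite RInt_mulc by cont. reflexivity. Qed.
Lemma inner_eq p q u : RInt (fun y => Kf p q u (cos y)) 0 (2*PI) =
  ch (p*u) * (Cv q - u^2 * Dv q) - ch (q*u) * (Cv p - u^2 * Dv p).
Proof.
  transitivity (RInt (fun y => exp (p*u) * Fp q u y + exp (-p*u) * Fp (-q) u y + (- exp (q*u)) * Fp p u y + (- exp (-q*u)) * Fp (-p) u y) 0 (2*PI)).
  apply RInt_ext. intros. unfold Kf, ch, Fp. rewrite !Ropp_plus_distr, !exp_plus, <- !Ropp_mult_distr_l. rring.
  rewrite lin4 by (intros; unfold Fp; auto_derive; auto).
  rewrite !Ipiece, !Dv_even, !Cv_even. unfold ch. rewrite <- !Ropp_mult_distr_l. rring.
Qed.
Lemma outer_eq p q : RInt (fun x => ch (p*cos x) * (Cv q - cos x^2 * Dv q) - ch (q*cos x) * (Cv p - cos x^2 * Dv p)) 0 (2*PI)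
  = 4 * (Cv q * Dv p - Cv p * Dv q).
Proof.
  transitivity (RInt (fun x => Cv q * (exp (p * cos x) + exp (-p * cos x)) + (- Dv q) * (cos x^2 * exp (p * cos x) + cos x^2 * exp (-p * cos x))
     + (- Cv p) * (exp (q * cos x) + exp (-q * cos x)) + Dv p * (cos x^2 * exp (q * cos x) + cos x^2 * exp (-q * cos x))) 0 (2*PI)).
  apply RInt_ext. intros. unfold ch. rewrite <- !Ropp_mult_distr_l. rring.
  rewrite lin4 by (intros; auto_derive; auto).
  rewrite (RInt_add (fun x => exp (p * cos x)) (fun x => exp (-p * cos x))) by cont.
  rewrite (RInt_add (fun x => exp (q * cos x)) (fun x => exp (-q * cos x))) by cont.
  rewrite (RInt_add (fun x => cos x^2 * exp (p * cos x)) (fun x => cos x^2 * exp (-p * cos x))) by cont.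
  rewrite (RInt_add (fun x => cos x^2 * exp (q * cos x)) (fun x => cos x^2 * exp (-q * cos x))) by cont.
  fold (Dv p) (Dv (-p)) (Dv q) (Dv (-q)) (Cv p) (Cv (-p)) (Cv q) (Cv (-q)).
  rewrite !Dv_even, !Cv_even. rring.
Qed.
Lemma key_ineq p q : 0 <= p < q -> Cv p * Dv q < Cv q * Dv p.
Proof. intros Hpq. pose proof PI_RGT_0 as Hpi.
  cut (0 < 4 * (Cv q * Dv p - Cv p * Dv q)). lra.
  rewrite <- outer_eq. apply (RInt_pos_pt _ 0 (2*PI) (PI/2)). lra. unfold ch; cont.
  - intros x _. rewrite <- inner_eq. apply RInt_ge_0. lra. apply ex_RInt_d. intros; unfold Kf, ch; auto_derive; auto.
    intros; apply Kf_nonneg; lra.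
  - rewrite <- inner_eq. apply (RInt_pos_pt _ 0 (2*PI) PI). lra. unfold Kf, ch; cont.
    intros; apply Kf_nonneg; lra. apply Kf_pos. lra. rewrite cos_PI, cos_PI2. lra.
Qed.
Lemma G_inj a b : 0 < a -> 0 < b -> Nv a / (a * Dv a) = Nv b / (b * Dv b) -> a = b.
Proof. intros Ha Hb H. rewrite !Nv_parts in H.
  pose proof (Dv_pos a). pose proof (Dv_pos b).
  replace (a * (Dv a - Cv a) / (a * Dv a)) with (1 - Cv a / Dv a) in H by (field; lra).
  replace (b * (Dv b - Cv b) / (b * Dv b)) with (1 - Cv b / Dv b) in H by (field; lra).
  assert (E : Cv a * Dv b = Cv b * Dv a).
  { assert (H2 : Cv a / Dv a = Cv b / Dv b) by lra.
    replace (Cv a * Dv b) with (Cv a / Dv a * (Dv a * Dv b)) by (field; lra).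
    rewrite H2. field; lra. }
  destruct (Rtotal_order a b) as [Hl|[He|Hl]]; auto.
  - pose proof (key_ineq a b (conj (Rlt_le _ _ Ha) Hl)). lra.
  - pose proof (key_ineq b a (conj (Rlt_le _ _ Hb) Hl)). lra.
Qed.
Lemma polar A B : 0 < sqrt (A^2+B^2) -> exists phi, A = sqrt (A^2+B^2) * cos phi /\ B = sqrt (A^2+B^2) * sin phi.
Proof. intros Hr. set (r := sqrt (A^2+B^2)) in *.
  assert (Hr2 : r * r = A^2 + B^2) by (unfold r; apply sqrt_sqrt; nra).
  set (c := A / r).
  assert (Hc : -1 <= c <= 1).
  { unfold c. assert (A^2 <= r^2) by nra. split.
    apply (Rmult_le_reg_r r); auto. unfold Rdiv. rewrite Rmult_assoc, Rinv_l by lra. nra.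
    apply (Rmult_le_reg_r r); auto. unfold Rdiv. rewrite Rmult_assoc, Rinv_l by lra. nra. }
  assert (Hs : sqrt (1 - c²) = Rabs B / r).
  { replace (1 - c²) with ((B / r)²). rewrite sqrt_Rsqr_abs. unfold Rdiv. rewrite Rabs_mult, (Rabs_right (/r)). auto.
    left; apply Rinv_0_lt_compat; auto. unfold c, Rsqr. field_simplify; try lra. 
    replace (r^2) with (A^2+B^2) by (rewrite <- Hr2; ring). field. intro; assert (r*r = 0) by (rewrite Hr2; lra); nra. }
  destruct (Rle_dec 0 B).
  - exists (acos c). rewrite cos_acos, sin_acos, Hs by auto. rewrite Rabs_right by lra. unfold c. split; field; lra.
  - exists (- acos c). rewrite cos_neg, sin_neg, cos_acos, sin_acos, Hs by auto. rewrite Rabs_left by lra. unfold c. split; field; lra.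
Qed.
Lemma rot A B : 0 < sqrt (A^2+B^2) ->
  RInt (fun x => exp (A * cos x + B * sin x)) 0 (2*PI) = Dv (sqrt (A^2+B^2)) /\
  RInt (fun x => cos x * exp (A * cos x + B * sin x)) 0 (2*PI) = A / sqrt (A^2+B^2) * Nv (sqrt (A^2+B^2)) /\
  RInt (fun x => sin x * exp (A * cos x + B * sin x)) 0 (2*PI) = B / sqrt (A^2+B^2) * Nv (sqrt (A^2+B^2)).
Proof. intros Hr. destruct (polar A B Hr) as [phi [HA HB]].
  set (r := sqrt (A^2+B^2)) in *.
  assert (Harg : forall x, A * cos x + B * sin x = r * cos (x + - phi)).
  { intros. rewrite cos_plus, cos_neg, sin_neg, HA, HB. ring. }
  assert (Hc : forall x, cos x = cos (x + - phi) * cos phi - sin (x + - phi) * sin phi).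
  { intros. rewrite <- cos_plus. f_equal. ring. }
  assert (Hs : forall x, sin x = sin (x + - phi) * cos phi + cos (x + - phi) * sin phi).
  { intros. rewrite <- sin_plus. f_equal. ring. }
  assert (S0 : RInt (fun x => sin (x + - phi) * exp (r * cos (x + - phi))) 0 (2*PI) = 0).
  { rewrite (shift (fun y => sin y * exp (r * cos y))). apply Sv0. cont. intros; rewrite sin2PI, cos2PI; auto. }
  assert (N0 : RInt (fun x => cos (x + - phi) * exp (r * cos (x + - phi))) 0 (2*PI) = Nv r).
  { rewrite (shift (fun y => cos y * exp (r * cos y))). reflexivity. cont. intros; rewrite cos2PI; auto. }
  split; [|split].
  - rewrite (RInt_ext _ (fun x => exp (r * cos (x + - phi)))).
    rewrite (shift (fun y => exp (r * cos y))). reflexivity. cont. intros; rewrite cos2PI; auto.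
    intros; rewrite Harg; auto.
  - rewrite (RInt_ext _ (fun x => cos phi * (cos (x + - phi) * exp (r * cos (x + - phi))) + (- sin phi) * (sin (x + - phi) * exp (r * cos (x + - phi))))).
    rewrite (RInt_add (fun x => cos phi * (cos (x + - phi) * exp (r * cos (x + - phi)))) (fun x => (- sin phi) * (sin (x + - phi) * exp (r * cos (x + - phi))))) by cont.
    rewrite !RInt_mulc by cont. rewrite S0, N0. rewrite HA at 1. match goal with |- ?a = ?b => change (a = b :> R) end; field; lra.
    intros; rewrite Harg, (Hc x). rring.
  - rewrite (RInt_ext _ (fun x => sin phi * (cos (x + - phi) * exp (r * cos (x + - phi))) + (cos phi) * (sin (x + - phi) * exp (r * cos (x + - phi))))).
    rewrite (RInt_add (fun x => sin phi * (cos (x + - phi) * exp (r * cos (x + - phi)))) (fun x => (cos phi) * (sin (x + - phi) * exp (r * cos (x + - phi))))) by cont.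
    rewrite !RInt_mulc by cont. rewrite S0, N0. rewrite HB at 1. match goal with |- ?a = ?b => change (a = b :> R) end; field; lra.
    intros; rewrite Harg, (Hs x). rring.
Qed.
Lemma RInt_C_split (f : R -> C) a b (u v : R -> R) : (forall x, fst (f x) = u x) -> (forall x, snd (f x) = v x) ->
  (forall x, continuous u x) -> (forall x, continuous v x) ->
  @RInt C_R_CompleteNormedModule f a b = (RInt u a b, RInt v a b).
Proof. intros Hu Hv Cu Cv. apply is_RInt_unique.
  apply (@is_RInt_fct_extend_pair R_NormedModule R_NormedModule).
  - apply (is_RInt_ext u). intros; rewrite Hu; auto. apply (@RInt_correct R_CompleteNormedModule). apply ex_RInt_c; auto.
  - apply (is_RInt_ext v). intros; rewrite Hv; auto. apply (@RInt_correct R_CompleteNormedModule). apply ex_RInt_c; auto.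
Qed.
Definition Zf A B := RInt (fun x => exp (A * cos x + B * sin x)) 0 (2*PI).
Definition M1f A B := RInt (fun x => cos x * exp (A * cos x + B * sin x)) 0 (2*PI).
Definition M2f A B := RInt (fun x => sin x * exp (A * cos x + B * sin x)) 0 (2*PI).
Lemma weight_eq theta h r Psi x eta : weight theta h r Psi x eta =
  exp ((2*theta*r*cos Psi + 2*h*eta) * cos x + (2*theta*r*sin Psi) * sin x).
Proof. unfold weight. rewrite cos_minus. f_equal. ring. Qed.
Lemma Zpart_eq theta h r Psi eta : Zpart theta h r Psi eta = Zf (2*theta*r*cos Psi + 2*h*eta) (2*theta*r*sin Psi).
Proof. unfold Zpart, Zf. apply RInt_ext. intros. rewrite weight_eq. auto. Qed.
Lemma inner_C theta h r Psi eta :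
  @RInt C_R_CompleteNormedModule (fun x => (RtoC (q theta h r Psi x eta) * cis x)%C) 0 (2 * PI) =
  (M1f (2*theta*r*cos Psi + 2*h*eta) (2*theta*r*sin Psi) / Zf (2*theta*r*cos Psi + 2*h*eta) (2*theta*r*sin Psi),
   M2f (2*theta*r*cos Psi + 2*h*eta) (2*theta*r*sin Psi) / Zf (2*theta*r*cos Psi + 2*h*eta) (2*theta*r*sin Psi)).
Proof.
  set (A := 2*theta*r*cos Psi + 2*h*eta). set (B := 2*theta*r*sin Psi). set (K := / Zf A B).
  rewrite (RInt_C_split _ _ _ (fun x => K * (cos x * exp (A * cos x + B * sin x))) (fun x => K * (sin x * exp (A * cos x + B * sin x)))).
  - rewrite !RInt_mulc by cont. unfold M1f, M2f, K. f_equal; unfold Rdiv; ring.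
  - intros. unfold q. rewrite Zpart_eq, weight_eq. simpl. fold A B K. ring.
  - intros. unfold q. rewrite Zpart_eq, weight_eq. simpl. fold A B K. ring.
  - cont.
  - cont.
Qed.
Lemma pair_eq (a b c d : R) : (a, b) = (c, d) <-> a = c /\ b = d.
Proof. split. intros H; injection H; auto. intros [-> ->]; auto. Qed.
Lemma SC_iff theta h r Psi : self_consistent theta h r Psi <->
  (r * cos Psi = / 2 * (M1f (2*theta*r*cos Psi + 2*h*(-1)) (2*theta*r*sin Psi) / Zf (2*theta*r*cos Psi + 2*h*(-1)) (2*theta*r*sin Psi)
                     + M1f (2*theta*r*cos Psi + 2*h*1) (2*theta*r*sin Psi) / Zf (2*theta*r*cos Psi + 2*h*1) (2*theta*r*sin Psi)) /\
   r * sin Psi = / 2 * (M2f (2*theta*r*cos Psi + 2*h*(-1)) (2*theta*r*sin Psi) / Zf (2*theta*r*cos Psi + 2*h*(-1)) (2*theta*r*sin Psi)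
                     + M2f (2*theta*r*cos Psi + 2*h*1) (2*theta*r*sin Psi) / Zf (2*theta*r*cos Psi + 2*h*1) (2*theta*r*sin Psi))).
Proof.
  unfold self_consistent, mu_integral. rewrite !inner_C.
  unfold cis, Cmult, Cplus, Cinv, RtoC. simpl.
  match goal with |- (?a, ?b) = (?c, ?d) <-> _ => 
    replace a with (r * cos Psi) by ring; replace b with (r * sin Psi) by ring end.
  rewrite pair_eq. 
  replace (2 * (2 * 1) + 0 * (0 * 1)) with 4 by ring.
  split; intros [H1 H2]; split; lra.
Qed.
Lemma BesselI_ratio y : BesselI 1 y / BesselI 0 y = Nv y / Dv y.
Proof. unfold BesselI.
  rewrite (RInt_ext (fun a => cos (1 * a) * exp (y * cos a)) (fun a => cos a * exp (y * cos a))).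
  rewrite (RInt_ext (fun a => cos (0 * a) * exp (y * cos a)) (fun a => exp (y * cos a))).
  fold (Nv y) (Dv y). pose proof (Dv_pos y). pose proof PI_RGT_0. field. lra.
  intros. rewrite Rmult_0_l, cos_0. rring.
  intros. rewrite Rmult_1_l. rring.
Qed.
Lemma Bzero A : Zf A 0 = Dv A /\ M1f A 0 = Nv A /\ M2f A 0 = 0.
Proof. unfold Zf, M1f, M2f. split; [|split].
  - apply RInt_ext. intros. rewrite Rmult_0_l, Rplus_0_r. auto.
  - apply RInt_ext. intros. rewrite Rmult_0_l, Rplus_0_r. auto.
  - transitivity (RInt (fun y => sin y * exp (A * cos y)) 0 (2*PI)). apply RInt_ext. intros. rewrite Rmult_0_l, Rplus_0_r. auto. apply Sv0.
Qed.
Definition Gf p := Nv p / (p * Dv p).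
Lemma rotG A B : B <> 0 -> 0 < sqrt (A^2+B^2) /\
  M1f A B / Zf A B = A * Gf (sqrt (A^2+B^2)) /\ M2f A B / Zf A B = B * Gf (sqrt (A^2+B^2)).
Proof. intros HB. assert (Hr : 0 < sqrt (A^2+B^2)) by (apply sqrt_lt_R0; nra).
  destruct (rot A B Hr) as [H1 [H2 H3]]. unfold Zf, M1f, M2f. rewrite H1, H2, H3. unfold Gf.
  pose proof (Dv_pos (sqrt (A^2+B^2))). split; auto. split; field; lra.
Qed.

Theorem proposition3 (theta h : R) (Htheta : 0 < theta) (Hh : 0 < h)
  (r Psi : R) (Hr : 0 < r) (HPsi : 0 <= Psi < 2 * PI) :
  self_consistent theta h r Psi <->
  (((Psi = 0 \/ Psi = PI) /\
     r = / 2 * (BesselI 1 (2 * (h + theta * r)) / BesselI 0 (2 * (h + theta * r))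
               - BesselI 1 (2 * (h - theta * r)) / BesselI 0 (2 * (h - theta * r))))
   \/
   ((Psi = PI / 2 \/ Psi = 3 * PI / 2) /\
     r = theta * r / sqrt (h ^ 2 + theta ^ 2 * r ^ 2)
         * (BesselI 1 (2 * sqrt (h ^ 2 + theta ^ 2 * r ^ 2))
            / BesselI 0 (2 * sqrt (h ^ 2 + theta ^ 2 * r ^ 2))))).
Proof.
  pose proof PI_RGT_0 as Hpi.
  rewrite SC_iff.
  set (Am := 2*theta*r*cos Psi + 2*h*(-1)).
  set (Ap := 2*theta*r*cos Psi + 2*h*1).
  set (B := 2*theta*r*sin Psi).
  rewrite !BesselI_ratio.
  set (S := sqrt (h ^ 2 + theta ^ 2 * r ^ 2)).
  assert (HS2 : S * S = h^2 + theta^2*r^2) by (unfold S; apply sqrt_sqrt; nra).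
  assert (HS : 0 < S) by (unfold S; apply sqrt_lt_R0; nra).
  pose proof (Dv_pos (2*S)) as HD2S.
  pose proof (Dv_pos (2*(h+theta*r))) as HD1.
  pose proof (Dv_pos (2*(h-theta*r))) as HD2.
  assert (Case0 : sin Psi = 0 -> (Psi = 0 \/ Psi = PI) ->
     ((r * cos Psi = / 2 * (M1f Am B / Zf Am B + M1f Ap B / Zf Ap B) /\
       r * sin Psi = / 2 * (M2f Am B / Zf Am B + M2f Ap B / Zf Ap B)) <->
      r = / 2 * (Nv (2 * (h + theta * r)) / Dv (2 * (h + theta * r)) - Nv (2 * (h - theta * r)) / Dv (2 * (h - theta * r))))).
  { intros Hs HP. assert (HB : B = 0) by (unfold B; rewrite Hs; ring). rewrite HB, Hs.
    destruct (Bzero Am) as [Z1 [N1 S1]]. destruct (Bzero Ap) as [Z2 [N2 S2]].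
    rewrite Z1, N1, S1, Z2, N2, S2.
    destruct HP as [HP|HP]; rewrite HP.
    - assert (HAm : Am = -(2*(h-theta*r))) by (unfold Am; rewrite HP, cos_0; ring).
      assert (HAp : Ap = 2*(h+theta*r)) by (unfold Ap; rewrite HP, cos_0; ring).
      rewrite HAm, HAp, Nv_odd, Dv_even, cos_0. unfold Rdiv. split; [intros [H1 H2]|intros H1; split]; lra.
    - assert (HAm : Am = -(2*(h+theta*r))) by (unfold Am; rewrite HP, cos_PI; ring).
      assert (HAp : Ap = 2*(h-theta*r)) by (unfold Ap; rewrite HP, cos_PI; ring).
      rewrite HAm, HAp, Nv_odd, Dv_even, cos_PI. unfold Rdiv. split; [intros [H1 H2]|intros H1; split]; lra. }
  assert (Case1 : cos Psi = 0 -> (sin Psi = 1 \/ sin Psi = -1) ->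
     ((r * cos Psi = / 2 * (M1f Am B / Zf Am B + M1f Ap B / Zf Ap B) /\
       r * sin Psi = / 2 * (M2f Am B / Zf Am B + M2f Ap B / Zf Ap B)) <->
      r = theta * r / S * (Nv (2 * S) / Dv (2 * S)))).
  { intros Hc Hs1. assert (HB : B <> 0) by (unfold B; destruct Hs1 as [-> | ->]; nra).
    destruct (rotG Am B HB) as [Rm [M1m M2m]]. destruct (rotG Ap B HB) as [Rp [M1p M2p]].
    rewrite M1m, M2m, M1p, M2p.
    assert (Hsq : forall A, A^2 = 4*h^2 -> sqrt (A^2 + B^2) = 2 * S).
    { intros A HA. apply sqrt_lem_1. nra. lra. unfold B.
      replace ((2*theta*r*sin Psi)^2) with (4*theta^2*r^2*(sin Psi)^2) by ring.
      replace (sin Psi ^2) with 1 by (destruct Hs1 as [-> | ->]; ring). nra. }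
    rewrite (Hsq Am), (Hsq Ap) by (unfold Am, Ap; rewrite Hc; ring).
    unfold Gf. rewrite Hc.
    assert (HAs : Am + Ap = 0) by (unfold Am, Ap; rewrite Hc; ring).
    set (g := Nv (2*S) / (2*S * Dv (2*S))).
    assert (Hg : theta * r / S * (Nv (2 * S) / Dv (2 * S)) = 2 * theta * r * g) by (unfold g; field; lra).
    rewrite Hg. unfold B.
    split.
    - intros [H1 H2]. destruct Hs1 as [Hs1|Hs1]; rewrite Hs1 in H2; nra.
    - intros H. split. nra. nra. }
  split.
  - intros [E1 E2].
    destruct (Req_dec (sin Psi) 0) as [Hs|Hs].
    + assert (HP : Psi = 0 \/ Psi = PI).
      { destruct (sin_eq_O_2PI_0 Psi) as [|[|]]; auto; lra. }
      left. split; auto. apply (proj1 (Case0 Hs HP)). split; auto.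
    + assert (E12 := conj E1 E2).
      assert (HB : B <> 0) by (unfold B; apply Rmult_integral_contrapositive; split; auto; assert (0 < 2*theta*r) by (repeat apply Rmult_lt_0_compat; lra); lra).
      destruct (rotG Am B HB) as [Rm [M1m M2m]]. destruct (rotG Ap B HB) as [Rp [M1p M2p]].
      rewrite M1m, M1p in E1. rewrite M2m, M2p in E2.
      set (gm := Gf (sqrt (Am^2 + B^2))) in *. set (gp := Gf (sqrt (Ap^2 + B^2))) in *.
      assert (Hsum : theta * (gm + gp) = 1).
      { assert (Hne : r * sin Psi <> 0) by (apply Rmult_integral_contrapositive; split; lra).
        assert (Heq : r * sin Psi * (theta * (gm + gp)) = r * sin Psi * 1).
        { rewrite Rmult_1_r. rewrite E2 at 2. unfold B. field. }
        exact (Rmult_eq_reg_l _ _ _ Heq Hne). }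
      assert (E : / 2 * (Am * gm + Ap * gp) = r * cos Psi * (theta * (gm + gp)) + h * (gp - gm)) by (unfold Am, Ap; field).
      rewrite Hsum in E.
      assert (Hgg0 : h * (gp - gm) = 0) by lra.
      apply Rmult_integral in Hgg0. assert (Hgg : gp = gm) by (destruct Hgg0; lra).
      assert (Hrho : sqrt (Ap^2 + B^2) = sqrt (Am^2 + B^2)) by (apply G_inj; [exact Rp | exact Rm | exact Hgg]).
      assert (Hsq : Ap^2 + B^2 = Am^2 + B^2).
      { assert (P1 : 0 <= Ap^2+B^2) by (apply Rplus_le_le_0_compat; apply pow2_ge_0).
        assert (P2 : 0 <= Am^2+B^2) by (apply Rplus_le_le_0_compat; apply pow2_ge_0).
        rewrite <- (sqrt_sqrt (Ap^2+B^2) P1). rewrite Hrho. apply sqrt_sqrt; exact P2. }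
      assert (Hc : cos Psi = 0).
      { assert (Ap^2 - Am^2 = 16*theta*r*h * cos Psi) by (unfold Ap, Am; ring).
        assert (Hz : 16 * theta * r * h * cos Psi = 0) by lra.
        assert (0 < 16 * theta * r * h) by (repeat apply Rmult_lt_0_compat; lra).
        apply Rmult_integral in Hz. destruct Hz; lra. }
      assert (HP : Psi = PI / 2 \/ Psi = 3 * (PI / 2)) by (apply cos_eq_0_2PI_0; auto; lra).
      assert (Hs1 : sin Psi = 1 \/ sin Psi = -1) by (destruct HP as [-> | ->]; [left; apply sin_PI2| right; apply sin_3PI2]).
      right. split. destruct HP; [left|right]; lra.
      apply (proj1 (Case1 Hc Hs1)). exact E12.
  - intros [[HQ Hf] | [HQ Hf]].
    + assert (Hs : sin Psi = 0) by (destruct HQ as [-> | ->]; [apply sin_0 | apply sin_PI]).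
      apply (proj2 (Case0 Hs HQ)). auto.
    + assert (HQ' : Psi = PI / 2 \/ Psi = 3 * (PI / 2)) by lra.
      assert (Hc : cos Psi = 0) by (apply cos_eq_0_2PI_1; auto; lra).
      assert (Hs1 : sin Psi = 1 \/ sin Psi = -1) by (destruct HQ' as [-> | ->]; [left; apply sin_PI2| right; apply sin_3PI2]).
      apply (proj2 (Case1 Hc Hs1)). auto.
Qed.
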